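(* Let $p$ be a prime and let $r,\alpha,\gamma$ be positive integers with $\alpha>1$ and $p\nmid\gamma$. If $p^{\alpha}\gamma\in F_r$, then $p^{\alpha-1}\gamma\in F_r$.
   Context: For a positive integer $r$, $S_r$ is the multiplicative arithmetic function with $S_r(q^{\beta})=0$ if $q\leq r$ and $S_r(q^{\beta})=q^{\beta-1}(q-r)$ if $q>r$, for all primes $q$ and positive integers $\beta$. $B_r=\{n\in\mathbb{N}: S_r(n)>0\}$ (positive integers whose smallest prime factor exceeds $r$, together with $1$). $F_r$ is the set of $n\in B_r$ such that $S_r(n)<S_r(m)$ for all $m\in B_r$ with $m>n$. *)

(* Defs.v *)
From mathcomp Require Import all_boot.
Set Implicit Arguments. Unset Strict Implicit. Unset Printing Implicit Defensive.

(* Natural-number valued (all values are >= 0). *)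
Definition S (r n : nat) : nat :=
  \prod_(q <- primes n) (if q <= r then 0 else q ^ (logn q n).-1 * (q - r)).

Definition inB (r n : nat) : Prop := 0 < n /\ 0 < S r n.

Definition inF (r n : nat) : Prop :=
  inB r n /\ forall m, inB r m -> n < m -> S r n < S r m.

(* Main.v *)
Require Import Defs.
From mathcomp Require Import all_boot.
From mathcomp Require Import zify.

Definition tm (r n q : nat) : nat :=
  if q <= r then 0 else q ^ (logn q n).-1 * (q - r).

Lemma S_tm r n : S r n = \prod_(q <- primes n) tm r n q.
Proof. by []. Qed.

Lemma tm_other r p m q : prime p -> 0 < m -> q \in primes m -> q != p ->
  tm r (p * m) q = tm r m q.
Proof.
move=> pp m0 qm qp; rewrite /tm (lognM _ (prime_gt0 pp) m0) (logn_prime q pp).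
by rewrite (negbTE qp).
Qed.

Lemma S_dvd r p m : prime p -> 0 < m -> p %| m -> S r (p * m) = p * S r m.
Proof.
move=> pp m0 pm.
have pm0 : 0 < p * m by rewrite muln_gt0 prime_gt0.
have pin : p \in primes m by rewrite mem_primes pp m0.
have hperm : perm_eq (primes (p * m)) (primes m).
  apply: uniq_perm; rewrite ?primes_uniq // => q.
  rewrite (primesM _ (prime_gt0 pp) m0) primes_prime // inE.
  by case: eqP => // ->.
rewrite !S_tm (perm_big _ hperm) /= !(bigD1_seq p) ?primes_uniq //.
rewrite mulnA; congr (_ * _).
  rewrite /tm (lognM _ (prime_gt0 pp) m0) (logn_prime p pp) eqxx.
  have : 0 < logn p m by rewrite logn_gt0.
  case: (logn p m) => // k _; case: ifP => _; first by rewrite muln0.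
  by rewrite add1n /= expnS mulnA.
rewrite big_seq_cond [in RHS]big_seq_cond; apply: eq_bigr => q /andP[qm qp].
exact: tm_other.
Qed.

Lemma S_ndvd r p m : prime p -> 0 < m -> ~~ (p %| m) -> r < p ->
  S r (p * m) = (p - r) * S r m.
Proof.
move=> pp m0 pm rp.
have pnin : p \notin primes m by rewrite mem_primes pp m0.
have hperm : perm_eq (primes (p * m)) (p :: primes m).
  apply: uniq_perm; rewrite /= ?pnin ?primes_uniq // => q.
  by rewrite (primesM _ (prime_gt0 pp) m0) primes_prime // inE.
rewrite !S_tm (perm_big _ hperm) /= big_cons; congr (_ * _).
  rewrite /tm (lognM _ (prime_gt0 pp) m0) (logn_prime p pp) eqxx.
  have -> : logn p m = 0 by apply/eqP; rewrite eqn0Ngt logn_gt0.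
  by rewrite leqNgt rp /= expn0 mul1n.
apply: eq_big_seq => q qm.
apply: tm_other => //; apply: contraNneq pnin => <-; exact: qm.
Qed.

Lemma S_le r p m : prime p -> 0 < m -> r < p -> S r (p * m) <= p * S r m.
Proof.
move=> pp m0 rp; case: (boolP (p %| m)) => pm.
  by rewrite S_dvd.
by rewrite S_ndvd // leq_mul2r leq_subr orbT.
Qed.

Theorem lemma3p2 (p r alpha gamma : nat) :
  prime p -> 0 < r -> 1 < alpha -> 0 < gamma -> ~~ (p %| gamma) ->
  inF r (p ^ alpha * gamma) -> inF r (p ^ alpha.-1 * gamma).
Proof.
move=> pp r0 a1 g0 pg [[n0 Sn0] HF].
have p0 := prime_gt0 pp.
have eqn : p ^ alpha * gamma = p * (p ^ alpha.-1 * gamma).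
  by clear -a1; case: alpha a1 => // a _; rewrite expnS mulnA.
have n'0 : 0 < p ^ alpha.-1 * gamma by rewrite muln_gt0 expn_gt0 p0.
have pdv : p %| p ^ alpha.-1 * gamma.
  by clear -a1; apply: dvdn_mulr; case: alpha a1 => // [[|a]] //= _; rewrite expnS dvdn_mulr.
have HS : S r (p ^ alpha * gamma) = p * S r (p ^ alpha.-1 * gamma).
  by rewrite eqn S_dvd.
have rp : r < p.
  rewrite ltnNge; apply/negP => pr.
  move: Sn0; rewrite S_tm (bigD1_seq p) ?primes_uniq //.
    by rewrite {1}/tm pr.
  by rewrite mem_primes pp n0; apply: dvdn_mulr; rewrite dvdn_exp // ltnW.
split.
  split => //; move: Sn0; rewrite HS muln_gt0; by case/andP.
move=> m [m0 Sm0] lt.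
have pm0 : 0 < p * m by rewrite muln_gt0 p0.
have pmB : inB r (p * m).
  split => //; case: (boolP (p %| m)) => pm.
    by rewrite S_dvd // muln_gt0 p0.
  by rewrite S_ndvd // muln_gt0 subn_gt0 rp.
have lt2 : p ^ alpha * gamma < p * m by rewrite eqn ltn_pmul2l.
have := HF _ pmB lt2; rewrite HS => h.
have := leq_trans h (@S_le r p m pp m0 rp).
by rewrite ltn_pmul2l.
Qed.
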